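(* Let $\mathcal C\subseteq 2^{[n]}$ be a $k$-inductively pierced code. Then $\mathcal C$ has a well-formed realization by open balls in $\mathbb R^{k+1}$ with the property that every interval of rank at most $k$ contained in $\mathcal C$ is pierceable at some point.
   Context: A code is a set $\mathcal C\subseteq 2^{[n]}$, $[n]=\{1,\dots,n\}$. Standing conventions: $\emptyset\in\mathcal C$; every neuron lies in some codeword; no two distinct neurons lie in exactly the same codewords. $\mathcal C\setminus i$ is obtained by removing $i$ from every codeword. For $\alpha\subseteq\beta$, $[\alpha,\beta]=\{\gamma:\alpha\subseteq\gamma\subseteq\beta\}$, of rank $|\beta\setminus\alpha|$. A neuron $i$ is a $k$-piercing of $\mathcal C$ if there are $\sigma\subseteq\tau\subseteq[n]\setminus\{i\}$ with $[\sigma,\tau]$ of rank $k$, $[\sigma,\tau]\subseteq\mathcal C\setminus i$, and $\mathcal C=(\mathcal C\setminus i)\cup[\sigma\cup\{i\},\tau\cup\{i\}]$. A code is $k$-inductively pierced if $\mathcal C=\{\emptyset\}$, or some neuron $i$ is a $k'$-piercing for some $k'\le k$ and $\mathcal C\setminus i$ is $k$-inductively pierced. For sets $U_1,\dots,U_n\subseteq\mathbb R^d$, the atom of $\gamma$ is $\bigcap_{i\in\gamma}U_i\setminus\bigcup_{j\notin\gamma}U_j$; the collection realizes $\mathcal C$ if $\mathcal C$ is exactly the set of $\gamma$ with nonempty atom. In a realization of $\mathcal C$, an interval $[\alpha,\beta]\subseteq\mathcal C$ is pierceable at $p$ if $p$ is a limit point of the atom of every codeword in $[\alpha,\beta]$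 and of no other atom. A collection of $(d-1)$-spheres in $\mathbb R^d$ is well-formed if for every $m\le d$ the intersection of any $m$ of them is empty or a $(d-m)$-dimensional sphere, and the intersection of any $d+1$ of them is empty; open balls are well-formed if their boundary spheres are. *)

(* Defs.v *)
From HB Require Import structures.
From mathcomp Require Import all_boot all_order all_algebra.
From mathcomp Require Import reals.
Set Implicit Arguments. Unset Strict Implicit. Unset Printing Implicit Defensive.
Import Order.TTheory GRing.Theory Num.Theory.
Local Open Scope ring_scope.

Definition code_conventions (n : nat) (C : {set {set 'I_n}}) : Prop :=
  [/\ set0 \in C,
      (forall i : 'I_n, exists2 c, c \in C & i \in c)
    & (forall i j : 'I_n, (forall c, c \in C -> (i \in c) = (j \in c)) -> i = j)].

Definition del_neuron (n : nat) (C : {set {set 'I_n}}) (i : 'I_n) :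
  {set {set 'I_n}} := [set c :\ i | c in C].

Definition interval_sets (n : nat) (a b : {set 'I_n}) : {set {set 'I_n}} :=
  [set g : {set 'I_n} | (a \subset g) && (g \subset b)].

Definition is_piercing (n : nat) (C : {set {set 'I_n}}) (i : 'I_n) (k : nat)
  : Prop :=
  exists s t : {set 'I_n},
    [/\ s \subset t, i \notin t, #|t :\: s| = k,
        interval_sets s t \subset del_neuron C i
      & C = del_neuron C i :|: interval_sets (i |: s) (i |: t)].

Inductive k_ind_pierced (n k : nat) : {set {set 'I_n}} -> Prop :=
| kip_trivial : k_ind_pierced k [set set0]
| kip_step (C : {set {set 'I_n}}) (i : 'I_n) (k' : nat) :
    (k' <= k)%N -> is_piercing C i k' ->
    k_ind_pierced k (del_neuron C i) -> k_ind_pierced k C.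

Definition sqdist (R : realType) (d : nat) (x y : 'rV[R]_d) : R :=
  \sum_(j < d) (x 0 j - y 0 j) ^+ 2.

(* open ball with center c and radius r (r > 0 required separately) *)
Definition open_ball (R : realType) (d : nat) (c : 'rV[R]_d) (r : R)
  : 'rV[R]_d -> Prop := fun x => sqdist x c < r ^+ 2.

Definition bsphere (R : realType) (d : nat) (c : 'rV[R]_d) (r : R)
  : 'rV[R]_d -> Prop := fun x => sqdist x c = r ^+ 2.

Definition is_dim_sphere (R : realType) (d j : nat) (S : 'rV[R]_d -> Prop)
  : Prop :=
  exists (c : 'rV[R]_d) (r : R) (V : {vspace 'rV[R]_d}),
    [/\ 0 < r, \dim V = j.+1
      & forall x, S x <-> (x - c \in V /\ sqdist x c = r ^+ 2)].

Definition well_formed_balls (R : realType) (d n : nat)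
  (c : 'I_n -> 'rV[R]_d) (r : 'I_n -> R) : Prop :=
  (forall S : {set 'I_n}, (1 <= #|S| <= d)%N ->
     let I := fun x => forall i, i \in S -> bsphere (c i) (r i) x in
     (forall x, ~ I x) \/ is_dim_sphere (d - #|S|) I)
  /\ (forall S : {set 'I_n}, #|S| = d.+1 ->
       forall x, ~ (forall i, i \in S -> bsphere (c i) (r i) x)).

Definition atom (R : realType) (d n : nat) (U : 'I_n -> 'rV[R]_d -> Prop)
  (g : {set 'I_n}) : 'rV[R]_d -> Prop :=
  fun x => (forall i, i \in g -> U i x) /\ (forall j, j \notin g -> ~ U j x).

Definition realizes (R : realType) (d n : nat) (U : 'I_n -> 'rV[R]_d -> Prop)
  (C : {set {set 'I_n}}) : Prop :=
  forall g : {set 'I_n}, (exists x, atom U g x) <-> g \in C.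

Definition limit_point (R : realType) (d : nat) (A : 'rV[R]_d -> Prop)
  (p : 'rV[R]_d) : Prop :=
  forall e : R, 0 < e -> exists x, [/\ A x, x != p & sqdist x p < e ^+ 2].

Definition pierceable_at (R : realType) (d n : nat)
  (U : 'I_n -> 'rV[R]_d -> Prop) (a b : {set 'I_n}) (p : 'rV[R]_d) : Prop :=
  forall g : {set 'I_n}, limit_point (atom U g) p <-> g \in interval_sets a b.

(* Main.v *)
Require Import Defs.
From HB Require Import structures.
From mathcomp Require Import all_boot all_order all_algebra.
From mathcomp Require Import reals ring lra.
Set Implicit Arguments. Unset Strict Implicit. Unset Printing Implicit Defensive.
Import Order.TTheory GRing.Theory Num.Theory.
Local Open Scope ring_scope.


Section Dot.
Variable R : realType.
Variable d : nat.
Implicit Types x y z u v w : 'rV[R]_d.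

Definition dot x y : R := \sum_(j < d) x 0 j * y 0 j.

Lemma dotC x y : dot x y = dot y x.
Proof. by apply: eq_bigr => j _; rewrite mulrC. Qed.

Lemma dotDl x y z : dot (x + y) z = dot x z + dot y z.
Proof. by rewrite /dot -big_split; apply: eq_bigr => j _; rewrite mxE mulrDl. Qed.

Lemma dotNl x z : dot (- x) z = - dot x z.
Proof. by rewrite /dot -sumrN; apply: eq_bigr => j _; rewrite mxE mulNr. Qed.

Lemma dotZl a x z : dot (a *: x) z = a * dot x z.
Proof. by rewrite /dot mulr_sumr; apply: eq_bigr => j _; rewrite mxE mulrA. Qed.

Lemma dotBl x y z : dot (x - y) z = dot x z - dot y z.
Proof. by rewrite dotDl dotNl. Qed.

Lemma dotDr x y z : dot z (x + y) = dot z x + dot z y.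
Proof. by rewrite dotC dotDl !(dotC z). Qed.
Lemma dotBr x y z : dot z (x - y) = dot z x - dot z y.
Proof. by rewrite dotC dotBl !(dotC z). Qed.
Lemma dotZr a x z : dot z (a *: x) = a * dot z x.
Proof. by rewrite dotC dotZl dotC. Qed.
Lemma dotNr x z : dot z (- x) = - dot z x.
Proof. by rewrite dotC dotNl dotC. Qed.
Lemma dot0l z : dot 0 z = 0.
Proof. by rewrite /dot big1 // => j _; rewrite mxE mul0r. Qed.
Lemma dot0r z : dot z 0 = 0.
Proof. by rewrite dotC dot0l. Qed.

Lemma dot_ge0 x : 0 <= dot x x.
Proof. by apply: sumr_ge0 => j _; rewrite -expr2 sqr_ge0. Qed.

Lemma dot_gt0 x : x != 0 -> 0 < dot x x.
Proof.
move=> nx; rewrite lt_def dot_ge0 andbT; apply/negP => /eqP H.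
move/negP: nx; apply; apply/eqP/matrixP => a j; rewrite mxE (ord1 a).
have: forall j, j \in predT -> x 0 j * x 0 j = 0.
  by apply/psumr_eq0P => //= l _; rewrite -expr2 sqr_ge0.
by move=> /(_ j isT) /eqP; rewrite mulf_eq0 orbb => /eqP.
Qed.

Lemma sqdistE x y : sqdist x y = dot (x - y) (x - y).
Proof. by apply: eq_bigr => j _; rewrite !mxE expr2. Qed.

Lemma sqdist_ge0 x y : 0 <= sqdist x y.
Proof. by rewrite sqdistE dot_ge0. Qed.

Lemma sqdistxx x : sqdist x x = 0.
Proof. by rewrite sqdistE subrr dot0l. Qed.

Lemma sqdistC x y : sqdist x y = sqdist y x.
Proof. by rewrite !sqdistE -opprB dotNl dotC dotNl opprK. Qed.

Lemma sqdist_gt0 x y : x != y -> 0 < sqdist x y.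
Proof. by move=> h; rewrite sqdistE dot_gt0 // subr_eq0. Qed.

Lemma sqdist_eq0 x y : sqdist x y = 0 -> x = y.
Proof.
move=> h; apply/eqP; apply/negPn/negP => /sqdist_gt0; rewrite h ltxx //.
Qed.

Lemma sqdist_shift x y z :
  sqdist x z = sqdist x y + 2 * dot (x - y) (y - z) + sqdist y z.
Proof.
rewrite !sqdistE.
have -> : x - z = (x - y) + (y - z) by rewrite addrA subrK.
move: (x - y) (y - z) => a b.
rewrite !dotDl !dotDr (dotC b a); ring.
Qed.

Lemma sq_tri (a b l : R) : 0 < l ->
  (a + b) ^+ 2 <= (1 + l) * a ^+ 2 + (1 + l^-1) * b ^+ 2.
Proof.
move=> l0.
have -> : (1 + l) * a ^+ 2 + (1 + l^-1) * b ^+ 2 =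
   (a + b) ^+ 2 + (l * a - b) ^+ 2 / l.
  by field; rewrite gt_eqF.
by rewrite lerDl divr_ge0 ?sqr_ge0 ?ltW.
Qed.

Lemma sqdist_tri x y z l : 0 < l ->
  sqdist x z <= (1 + l) * sqdist x y + (1 + l^-1) * sqdist y z.
Proof.
move=> l0; rewrite /sqdist !mulr_sumr -big_split /=; apply: ler_sum => j _.
have -> : x 0 j - z 0 j = (x 0 j - y 0 j) + (y 0 j - z 0 j) by rewrite addrA subrK.
exact: sq_tri.
Qed.

Lemma sqdist_tri2 x y z : sqdist x z <= 2 * sqdist x y + 2 * sqdist y z.
Proof. by have := @sqdist_tri x y z 1 ltr01; rewrite invr1. Qed.

Lemma lt_nbhd q z M : sqdist q z < M ->
  exists2 D, 0 < D & forall x, sqdist x q < D -> sqdist x z < M.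
Proof.
move=> hM; set m := sqdist q z.
have m0 : 0 <= m by exact: sqdist_ge0.
set l := (M - m) / (2 * (m + 1)).
have l0 : 0 < l by rewrite divr_gt0 // ?subr_gt0 //; lra.
have hlm : (1 + l) * m < M.
  have e : l * m = (M - m) / 2 * (m / (m + 1)).
    rewrite /l; field; lra.
  have : m / (m + 1) <= 1 by rewrite ler_pdivrMr; lra.
  have : 0 <= (M - m) / 2 by rewrite divr_ge0 // subr_ge0 ltW.
  move=> h1 h2; have : l * m <= (M - m) / 2.
    by rewrite e; apply: ler_piMr.
  rewrite ler_pdivlMr // => h3.
  rewrite mulrDl mul1r. 
  have hM' : m < M by [].
  lra.
exists ((M - (1 + l) * m) / (1 + l^-1)).
  by rewrite divr_gt0 ?subr_gt0 // ltr_wpDr // invr_ge0 ltW.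
move=> x hx.
have li0 : 0 < l^-1 by rewrite invr_gt0.
have := @sqdist_tri x q z l^-1 li0; rewrite invrK.
have hl' : 0 < 1 + l^-1 by rewrite ltr_wpDr // invr_ge0 ltW.
move: hx; rewrite ltr_pdivlMr // => hx.
rewrite -/m; lra.
Qed.

Lemma gt_nbhd q z M : 0 <= M -> M < sqdist q z ->
  exists2 D, 0 < D & forall x, sqdist x q < D -> M < sqdist x z.
Proof.
move=> M0 hM; set m := sqdist q z.
set l := (M + 1) / (m - M).
have mM : 0 < m - M by rewrite subr_gt0.
have l0 : 0 < l by rewrite divr_gt0 //; lra.
have hl : M * (1 + l^-1) < m.
  have -> : M * (1 + l^-1) = M * (m + 1) / (M + 1).
    rewrite /l invf_div; field; lra.
  rewrite ltr_pdivrMr; last lra.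
  have hMm : M < m by [].
  nra.
have hl1 : 0 < 1 + l by lra.
exists ((m - M * (1 + l^-1)) / (1 + l)).
  by rewrite divr_gt0 ?subr_gt0.
move=> x hx.
have := @sqdist_tri q x z l l0; rewrite -/m sqdistC => h.
move: hx; rewrite ltr_pdivlMr // => hx.
have hl2 : 0 < 1 + l^-1 by rewrite ltr_wpDr // invr_ge0 ltW.
have : M * (1 + l^-1) < (1 + l^-1) * sqdist x z by lra.
by rewrite mulrC ltr_pM2l.
Qed.

End Dot.

Lemma fin_min (R : realType) (I : finType) (P : I -> R -> Prop) :
  (forall i, exists2 D, 0 < D & P i D) ->
  (forall i D D', 0 < D' -> D' <= D -> P i D -> P i D') ->
  exists2 D, 0 < D & forall i, P i D.
Proof.
move=> hP hmono.
suff : forall s : seq I, exists2 D, 0 < D & forall i, i \in s -> P i D.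
  by case/(_ (enum I)) => D D0 h; exists D => // i; apply: h; rewrite mem_enum.
elim=> [|a s [D D0 IH]]; first by exists 1.
have [Da Da0 ha] := hP a.
exists (Num.min D Da); first by rewrite lt_min D0.
move=> i; rewrite in_cons => /orP [/eqP -> | his].
  by apply: hmono ha; rewrite ?lt_min ?D0 ?ge_min ?lexx ?orbT.
by apply: hmono (IH _ his); rewrite ?lt_min ?D0 ?ge_min ?lexx.
Qed.

Lemma orth_exists (R : realType) (d n : nat) (T : {set 'I_n}) (u : 'I_n -> 'rV[R]_d) :
  (#|T| < d)%N ->
  (forall beta : 'I_n -> R, exists w, forall j, j \in T -> dot w (u j) = beta j) ->
  exists v, 0 < dot v v /\ forall j, j \in T -> dot v (u j) = 0.
Proof.
move=> Td hs.
pose e := fun l : 'I_#|T| => (enum_val l : 'I_n).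
pose A : 'M[R]_(d, #|T|) := \matrix_(a, l) u (e l) 0 a.
have hA : forall x l, (x *m A) 0 l = dot x (u (e l)).
  by move=> x l; rewrite mxE; apply: eq_bigr => a _; rewrite mxE.
have fA : row_full A.
  rewrite -sub1mx; apply/row_subP => l; apply/submxP.
  have [w hw] := hs (fun j => (j == e l)%:R).
  exists w; apply/rowP => l'; rewrite hA hw; last exact: enum_valP.
  rewrite !mxE /=.
  by rewrite /e (inj_eq enum_val_inj) eq_sym.
have rA : \rank A = #|T|.
  by apply/eqP; rewrite eqn_leq rank_leq_col col_leq_rank fA.
have rK : \rank (kermx A) = (d - #|T|)%N by rewrite mxrank_ker rA.
have : kermx A != 0.
  apply/eqP => K0; move: rK; rewrite K0 mxrank0 => /esym/eqP.
  by rewrite subn_eq0 leqNgt Td.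
move=> Kn0.
have [a ha] : exists a, row a (kermx A) != 0.
  case: (pickP (fun a => row a (kermx A) != 0)) => [a ha|H]; first by exists a.
  case/negP: Kn0; apply/eqP/row_matrixP => a.
  by rewrite row0; apply/eqP; move: (H a) => /negbFE.
exists (row a (kermx A)); split; first exact: dot_gt0.
move=> j hj.
have -> : j = e (enum_rank_in hj j) by rewrite /e enum_rankK_in.
by rewrite -hA -row_mul mulmx_ker row0 mxE.
Qed.


Section Good.
Variables (R : realType) (n k : nat).
Local Notation d := k.+1.
Implicit Types (c : 'I_n -> 'rV[R]_d) (r : 'I_n -> R) (p q x : 'rV[R]_d).

Definition good c r p (A T : {set 'I_n}) : Prop :=
 [/\ (#|T| <= k)%N,
     (forall j, j \in T -> 0 < r j /\ sqdist p (c j) = r j ^+ 2),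
     (exists2 D, 0 < D & forall x, sqdist x p < D ->
         (forall j, j \in A -> sqdist x (c j) < r j ^+ 2) /\
         (forall j, j \notin A -> j \notin T -> r j = 0 \/ r j ^+ 2 < sqdist x (c j)))
   & forall beta : 'I_n -> R, exists w, forall j, j \in T -> dot w (p - c j) = beta j].

Lemma orth_perp (w v : 'rV[R]_d) : 0 < dot v v ->
  dot (w - (dot w v / dot v v) *: v) v = 0.
Proof.
move=> vv; rewrite dotBl dotZl mulfVK ?subrr //; by rewrite gt_eqF.
Qed.

Lemma orth_keep (w v u : 'rV[R]_d) : dot v u = 0 ->
  dot (w - (dot w v / dot v v) *: v) u = dot w u.
Proof. by move=> h; rewrite dotBl dotZl h mulr0 subr0. Qed.

Lemma local_lemma c r p A T (J In : {set 'I_n}) :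
  (forall j, 0 <= r j) -> good c r p A T ->
  J \subset T -> In \subset T -> [disjoint J & In] ->
  exists2 t0, 0 < t0 & forall t, 0 < t -> t < t0 ->
   exists q, [/\ sqdist q p = t, good c r q (A :|: In) J &
     forall (beta : 'I_n -> R) (bi : R), exists w,
       (forall j, j \in J -> dot w (q - c j) = beta j) /\ dot w (q - p) = bi].
Proof.
move=> r0 [Tk hT [D D0 hD] hs] JT InT dJI.
have [v [vv vu]] := @orth_exists R d n T (fun j => p - c j) Tk hs.
pose b0 := fun j => if j \in J then -1 else if j \in In then -2 else 0 : R.
have [w hw] := hs b0.
pose w0 := w - (dot w v / dot v v) *: v.
have w0v : dot w0 v = 0 by exact: orth_perp.
have w0u : forall j, j \in T -> dot w0 (p - c j) = b0 j.
  by move=> j hj; rewrite orth_keep ?vu // hw.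
clearbody w0.
set W := dot w0 w0.
have W0 : 0 <= W by exact: dot_ge0.
exists (Num.min (D / 4) (4 / (W + 1))).
  by rewrite lt_min !divr_gt0 //; lra.
move=> t t0 tlt.
move: tlt; rewrite lt_min => /andP [tD tW].
have htW : t * W < 4.
  move: tW; rewrite ltr_pdivlMr; last lra.
  nra.
set tau := t / 2.
have sig0 : 0 < (2 * tau - tau ^+ 2 * W) / dot v v.
  apply: divr_gt0 => //; rewrite /tau; nra.
set sig := Num.sqrt ((2 * tau - tau ^+ 2 * W) / dot v v).
have sigpos : 0 < sig by rewrite sqrtr_gt0.
have sig2 : sig ^+ 2 = (2 * tau - tau ^+ 2 * W) / dot v v.
  by rewrite sqr_sqrtr // ltW.
clearbody sig.
set y := tau *: w0 + sig *: v.
have yy : dot y y = t.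
  rewrite /y !(dotDl, dotDr, dotZl, dotZr) w0v (dotC v w0) w0v -/W.
  rewrite !mulr0 addr0 add0r (mulrA sig sig) -(expr2 sig) sig2 mulfVK ?gt_eqF //.
  by rewrite /tau; field.
have yu : forall j, j \in T -> dot y (p - c j) = tau * b0 j.
  by move=> j hj; rewrite /y dotDl !dotZl w0u // vu // mulr0 addr0.
have yv : dot y v = sig * dot v v.
  by rewrite /y dotDl !dotZl w0v mulr0 add0r.
have yw : forall z, dot z y = tau * dot z w0 + sig * dot z v.
  by move=> z; rewrite /y dotDr !dotZr.
clearbody y.
have fq : forall j, j \in T -> sqdist (p + y) (c j) = r j ^+ 2 + t * (1 + b0 j).
  move=> j hj; have [_ hpj] := hT j hj.
  rewrite sqdistE.
  have -> : p + y - c j = (p - c j) + y by rewrite addrAC.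
  rewrite sqdistE in hpj; have yu' := yu j hj.
  move: hpj yu'; move: (p - c j) => u hpj yu'.
  by rewrite dotDl !dotDr hpj yy (dotC u y) yu' /tau; field.
have svv : sig * dot v v != 0 by rewrite mulf_neq0 // gt_eqF.
have hsurj : forall (beta : 'I_n -> R) (bi : R), exists w,
       (forall j, j \in J -> dot w (p + y - c j) = beta j) /\ dot w (p + y - p) = bi.
  move=> beta bi.
  have [w1 hw1] := hs (fun j => beta j - bi).
  pose w1' := w1 - (dot w1 v / dot v v) *: v.
  have w1v : dot w1' v = 0 by exact: orth_perp.
  have w1u : forall j, j \in T -> dot w1' (p - c j) = beta j - bi.
    by move=> j hj; rewrite orth_keep ?vu // hw1.
  clearbody w1'.
  pose lam := (bi - tau * dot w1' w0) / (sig * dot v v).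
  have hy : dot (w1' + lam *: v) y = bi.
    rewrite dotDl dotZl (dotC v y) yv yw w1v /lam; field.
    by rewrite !gt_eqF.
  exists (w1' + lam *: v); split.
  + move=> j hj; have jT : j \in T by apply: (subsetP JT).
    have -> : p + y - c j = (p - c j) + y by rewrite addrAC.
    rewrite dotDr hy dotDl dotZl w1u // vu // mulr0 addr0.
    by rewrite addrNK.
  + by rewrite addrAC subrr add0r.

exists (p + y); split.
- by rewrite sqdistE addrAC subrr add0r.
- split.
  + exact: leq_trans (subset_leq_card JT) Tk.
  + move=> j hj; have jT : j \in T by apply: (subsetP JT).
    split; first by case: (hT j jT).
    by rewrite fq // /b0 hj; ring.
  + have [Dq Dq0 hDq] : exists2 Dq, 0 < Dq & forall j x, sqdist x (p + y) < Dq ->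
        (j \in In -> sqdist x (c j) < r j ^+ 2) /\
        (j \in T -> j \notin J -> j \notin In -> r j ^+ 2 < sqdist x (c j)).
      apply: (@fin_min R _ (fun j Dj => forall x, sqdist x (p + y) < Dj ->
        (j \in In -> sqdist x (c j) < r j ^+ 2) /\
        (j \in T -> j \notin J -> j \notin In -> r j ^+ 2 < sqdist x (c j)))).
    * move=> j.
      case: (boolP (j \in In)) => jIn.
      - have jT : j \in T by apply: (subsetP InT).
        have jJ : j \notin J by rewrite (disjointFl dJI jIn).
        have : sqdist (p + y) (c j) < r j ^+ 2.
          by rewrite fq // /b0 (negbTE jJ) jIn; lra.
        case/lt_nbhd => Dj Dj0 hDj; exists Dj => // x hx; split => // _; exact: hDj.
      case: (boolP (j \in T)) => jT; last by exists 1 => // x _; split => //; rewrite jT.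
      case: (boolP (j \in J)) => jJ; first by exists 1 => // x _; split => //; rewrite jJ.
      have : r j ^+ 2 < sqdist (p + y) (c j).
        by rewrite fq // /b0 (negbTE jJ) (negbTE jIn); lra.
      case/gt_nbhd; first exact: sqr_ge0.
      move=> Dj Dj0 hDj; exists Dj => // x hx; split => // _ _ _; exact: hDj.
    * move=> j D1 D2 D20 D21 h x hx; apply: h; exact: lt_le_trans hx D21.
    exists (Num.min (D / 4) Dq); first by rewrite lt_min Dq0 divr_gt0.
    move=> x; rewrite lt_min => /andP [hx1 hx2].
    have hxp : sqdist x p < D.
      have := sqdist_tri2 x (p + y) p.
      rewrite [sqdist (p + y) p]sqdistE addrAC subrr add0r yy.
      lra.
    have [hA hO] := hD x hxp.
    split.
    - move=> j; rewrite inE => /orP [jA|jIn]; first exact: hA.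
      by apply: (hDq j x hx2).1.
    - move=> j; rewrite inE negb_or => /andP [jA jIn] jJ.
      case: (boolP (j \in T)) => jT; last exact: hO.
      by right; apply: (hDq j x hx2).2.
  + by move=> beta; have [w2 [hw2 _]] := hsurj beta 0; exists w2.
- exact: hsurj.
Qed.
End Good.


Section Sphere.
Variable (R : realType) (d : nat).

Definition fu (u : 'rV[R]_d) : 'Hom('rV[R]_d, 'rV[R]_1) := linfun (mulmxr u^T).

Lemma fu0 u x : (fu u x == 0) = (dot x u == 0).
Proof.
rewrite lfunE /=.
have -> : dot x u = (x *m u^T) 0 0.
  by rewrite mxE; apply: eq_bigr => j _; rewrite mxE.
apply/eqP/eqP => [->|h]; first by rewrite mxE.
by rewrite [x *m u^T]mx11_scalar h; apply/matrixP => a b; rewrite !mxE mul0rn.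
Qed.

Lemma is_dim_sphere_ext m (S1 S2 : 'rV[R]_d -> Prop) :
  (forall x, S1 x <-> S2 x) -> is_dim_sphere m S1 -> is_dim_sphere m S2.
Proof.
move=> h [c [r [V [r0 dV hS]]]]; exists c, r, V; split => // x.
by rewrite -h.
Qed.

Lemma sphere_cut m (S : 'rV[R]_d -> Prop) p :
  is_dim_sphere m.+1 S -> S p ->
  exists2 E, 0 < E & forall e, 0 < e -> e ^+ 2 < E ->
    is_dim_sphere m (fun x => S x /\ sqdist x p = e ^+ 2).
Proof.
move=> [c0 [rho [V [rho0 dV hS]]]] Sp.
have [pV pd] := (hS p).1 Sp.
set u := p - c0.
have uu : dot u u = rho ^+ 2 by rewrite /u -sqdistE.
have rr : 0 < rho ^+ 2 by rewrite exprn_gt0.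
exists (4 * rho ^+ 2); first by rewrite mulr_gt0.
move=> e e0 eE.
set H := rho ^+ 2 - e ^+ 2 / 2.
set lam := H / rho ^+ 2.
have hpos : 0 < rho ^+ 2 - H ^+ 2 / rho ^+ 2.
  rewrite subr_gt0 ltr_pdivrMr // -expr2 /H.
  have e2 : 0 < e ^+ 2 by rewrite exprn_gt0.
  nra.
exists (c0 + lam *: u), (Num.sqrt (rho ^+ 2 - H ^+ 2 / rho ^+ 2)),
  (V :&: lker (fu u))%VS; split.
- by rewrite sqrtr_gt0.
- have := limg_ker_dim (fu u) V; rewrite dV.
  suff -> : \dim (fu u @: V) = 1%N by rewrite addn1 => -[].
  apply/eqP; rewrite eqn_leq; apply/andP; split.
    by have := dimvS (subvf (fu u @: V)%VS); rewrite dimvf /dim /= mul1n.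
  rewrite lt0n dimv_eq0; apply/negP => /eqP h0.
  have := memv_img (fu u) pV; rewrite h0 memv0 fu0 uu => /eqP.
  by move/eqP; rewrite gt_eqF.
- move=> x.
  rewrite sqr_sqrtr; last exact: ltW.
  rewrite hS memv_cap memv_ker fu0.
  have e1 : sqdist x p = sqdist x c0 - 2 * dot (x - c0) u + rho ^+ 2.
    rewrite (sqdist_shift x c0 p) (sqdistC c0 p) pd.
    have -> : c0 - p = - u by rewrite /u opprB.
    by rewrite dotNr; ring.
  have e2 : sqdist x (c0 + lam *: u) =
      sqdist x c0 - 2 * lam * dot (x - c0) u + lam ^+ 2 * rho ^+ 2.
    rewrite (sqdist_shift x c0 (c0 + lam *: u)).
    have -> : c0 - (c0 + lam *: u) = - (lam *: u) by rewrite opprD addrA subrr add0r.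
    rewrite dotNr dotZr (sqdistE c0) opprD addrA subrr add0r dotNl dotNr opprK.
    by rewrite dotZl dotZr uu; ring.
  have e3 : dot (x - (c0 + lam *: u)) u = dot (x - c0) u - lam * rho ^+ 2.
    by rewrite opprD addrA (dotBl (x - c0)) dotZl uu.
  have e4 : x - c0 = (x - (c0 + lam *: u)) + lam *: u.
    by rewrite opprD addrA subrK.
  have uV : u \in V by [].
  have hV : (x - (c0 + lam *: u) \in V) = (x - c0 \in V).
    apply/idP/idP => h.
      by rewrite e4 rpredD // rpredZ.
    by rewrite opprD addrA rpredB // rpredZ.
  rewrite hV e1 e2 e3.
  have lr : lam * rho ^+ 2 = H by rewrite /lam mulfVK // gt_eqF.
  split.
  + move=> [[h1 h2] h3].
    have hY : dot (x - c0) u = H by rewrite /H; lra.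
    rewrite h1 hY lr subrr eqxx; split => //.
    rewrite h2 /lam; field; by rewrite gt_eqF.
  + move=> [/andP [h1 /eqP h2] h3].
    have hY : dot (x - c0) u = H by lra.
    move: h3; rewrite hY.
    have -> : 2 * lam * H = 2 * (H ^+ 2 / rho ^+ 2) by rewrite /lam; field; rewrite gt_eqF.
    have -> : lam ^+ 2 * rho ^+ 2 = H ^+ 2 / rho ^+ 2 by rewrite /lam; field; rewrite gt_eqF.
    move=> h3.
    have hX : sqdist x c0 = rho ^+ 2 by lra.
    split; first by split.
    by rewrite hX /H; lra.
Qed.
End Sphere.


Lemma setUDK (T : finType) (a g : {set T}) : a \subset g -> a :|: g :\: a = g.
Proof.
move=> ag; apply/setP => j; rewrite !inE.
by case: (boolP (j \in a)) => //= ja; rewrite (subsetP ag j ja).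
Qed.

Section Pierce.
Variables (R : realType) (n k : nat).
Local Notation d := k.+1.
Implicit Types (c : 'I_n -> 'rV[R]_d) (r : 'I_n -> R) (p q x : 'rV[R]_d) (a b g A T : {set 'I_n}).
Local Notation good := (@good R n k).
Local Notation UU c r := (fun j => open_ball (c j) (r j)).

Lemma notU c r j x : r j = 0 \/ r j ^+ 2 < sqdist x (c j) -> ~ open_ball (c j) (r j) x.
Proof.
rewrite /open_ball => -[-> | h] h'.
  by move: h'; rewrite expr0n /= ltNge sqdist_ge0.
by move: (lt_trans h h'); rewrite ltxx.
Qed.

Lemma good_atom c r q A T : good c r q A T -> atom (UU c r) A q.
Proof.
move=> [_ hT [D D0 hD] _].
have hq : sqdist q q < D by rewrite sqdistxx.
have [hA hO] := hD q hq.
split => j hj; first exact: hA.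
case: (boolP (j \in T)) => jT; last exact: @notU c r j _ (hO j hj jT).
by rewrite /open_ball (hT j jT).2 ltxx.
Qed.

Lemma good_pierce c r p a b : (forall j, 0 <= r j) -> a \subset b -> good c r p a (b :\: a) ->
  pierceable_at (UU c r) a b p.
Proof.
move=> r0 ab hg; have [Tk hT [D D0 hD] hs] := hg.
move=> g; split.
- move=> lp.
  have e0 : 0 < Num.sqrt D / 2 by rewrite divr_gt0 // sqrtr_gt0.
  have [x [hx _ hxp]] := lp _ e0.
  have hxD : sqdist x p < D.
    apply: (lt_le_trans hxp); rewrite expr_div_n sqr_sqrtr ?ltW //.
    by rewrite ltr_pdivrMr //; nra.
  have [hA hO] := hD x hxD.
  have [hg1 hg2] := hx.
  rewrite inE; apply/andP; split; apply/subsetP => j hj.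
    by apply/negPn/negP => /hg2; apply; exact: hA.
  apply/negPn/negP => jb.
  have ja : j \notin a by apply/negP => /(subsetP ab); rewrite (negbTE jb).
  have jT : j \notin b :\: a by rewrite inE (negbTE jb) andbF.
  exact: (@notU c r j x (hO j ja jT) (hg1 j hj)).
- rewrite inE => /andP [ag gb].
  have InT : g :\: a \subset b :\: a by apply: setSD.
  have dj : [disjoint set0 & g :\: a] by rewrite -setI_eq0 set0I.
  have [t0 t00 ht] := local_lemma r0 hg (sub0set _) InT dj.
  move=> e e0.
  have e2 : 0 < e ^+ 2 by rewrite exprn_gt0.
  set t := Num.min (t0 / 2) (e ^+ 2 / 2).
  have tt0 : 0 < t by rewrite lt_min !divr_gt0.
  have tlt : t < t0 by rewrite /t gt_min ltr_pdivrMr //; lra.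
  have [q [hqp hgq _]] := ht t tt0 tlt.
  exists q; split.
  + by move: (good_atom hgq); rewrite setUDK.
  + by apply/eqP => qp; move: hqp; rewrite qp sqdistxx => h; move: tt0; rewrite -h ltxx.
  + by rewrite hqp /t gt_min; apply/orP; right; rewrite ltr_pdivrMr //; lra.
Qed.

Definition updc c (i : 'I_n) p : 'I_n -> 'rV[R]_d := fun j => if j == i then p else c j.
Definition updr r (i : 'I_n) (e : R) : 'I_n -> R := fun j => if j == i then e else r j.

Lemma good_out c r q A T i p e : good c r q A T -> i \notin A -> i \notin T ->
  e ^+ 2 < sqdist q p -> good (updc c i p) (updr r i e) q A T.
Proof.
move=> [Tk hT [D D0 hD] hs] iA iT hq.
have [D2 D20 hD2] := gt_nbhd (sqr_ge0 e) hq.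
split => //.
- move=> j jT; rewrite /updc /updr; case: eqP => [ji|_]; last exact: hT.
  by move: iT; rewrite -ji jT.
- exists (Num.min D D2); first by rewrite lt_min D0.
  move=> x; rewrite lt_min => /andP [h1 h2]; have [hA hO] := hD x h1.
  split => j; rewrite /updc /updr; case: eqP => [ji|_].
  + by move=> jA; move: iA; rewrite -ji jA.
  + exact: hA.
  + by move=> _ _; right; exact: hD2.
  + exact: hO.
- move=> beta; have [w hw] := hs beta; exists w => j jT.
  rewrite /updc; case: eqP => [ji|_]; last exact: hw.
  by move: iT; rewrite -ji jT.
Qed.

Lemma good_in c r q A T i p e : good c r q A T -> i \notin A -> i \notin T ->
  sqdist q p < e ^+ 2 -> good (updc c i p) (updr r i e) q (i |: A) T.
Proof.
move=> [Tk hT [D D0 hD] hs] iA iT hq.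
have [D2 D20 hD2] := lt_nbhd hq.
split => //.
- move=> j jT; rewrite /updc /updr; case: eqP => [ji|_]; last exact: hT.
  by move: iT; rewrite -ji jT.
- exists (Num.min D D2); first by rewrite lt_min D0.
  move=> x; rewrite lt_min => /andP [h1 h2]; have [hA hO] := hD x h1.
  split => j; rewrite /updc /updr !inE; case: eqP => [ji|_] /=.
  + by move=> _; exact: hD2.
  + exact: hA.
  + by [].
  + exact: hO.
- move=> beta; have [w hw] := hs beta; exists w => j jT.
  rewrite /updc; case: eqP => [ji|_]; last exact: hw.
  by move: iT; rewrite -ji jT.
Qed.

Lemma good_on c r q A T i p e : good c r q A T -> i \notin A -> i \notin T ->
  0 < e -> sqdist q p = e ^+ 2 -> (#|T| < k)%N ->
  (forall (beta : 'I_n -> R) (bi : R), exists w,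
       (forall j, j \in T -> dot w (q - c j) = beta j) /\ dot w (q - p) = bi) ->
  good (updc c i p) (updr r i e) q A (i |: T).
Proof.
move=> [Tk hT [D D0 hD] hs] iA iT e0 hq Tk' hs2.
split.
- by rewrite cardsU1 iT.
- move=> j; rewrite /updc /updr !inE; case: eqP => [ji|_] /= jT; first by [].
  exact: hT.
- exists D => // x h1; have [hA hO] := hD x h1.
  split => j; rewrite /updc /updr ?inE; case: eqP => [ji|_] /=.
  + by move=> jA; move: iA; rewrite -ji jA.
  + exact: hA.
  + by [].
  + exact: hO.
- move=> beta; have [w [hw hwi]] := hs2 beta (beta i); exists w => j.
  rewrite /updc !inE; case: eqP => [->|_] /= jT; first by [].
  exact: hw.
Qed.

End Pierce.


Section Main.
Variables (R : realType) (n k : nat).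
Local Notation d := k.+1.
Implicit Types (c : 'I_n -> 'rV[R]_d) (r : 'I_n -> R) (p q x : 'rV[R]_d) (a b g s t A T S : {set 'I_n}).
Implicit Types (C : {set {set 'I_n}}).
Local Notation good := (@good R n k).
Local Notation UU c r := (fun j => open_ball (c j) (r j)).

Definition wfA c r : Prop :=
  (forall S, S \subset [set j | 0 < r j] -> (1 <= #|S| <= d)%N ->
     let I := fun x => forall i, i \in S -> bsphere (c i) (r i) x in
     (forall x, ~ I x) \/ is_dim_sphere (d - #|S|) I)
  /\ (forall S, S \subset [set j | 0 < r j] -> #|S| = d.+1 ->
       forall x, ~ (forall i, i \in S -> bsphere (c i) (r i) x)).

Definition Inv C c r := [/\ forall j, 0 <= r j, realizes (UU c r) C, wfA c r &
  forall a b, a \subset b -> (#|b :\: a| <= k)%N -> interval_sets a b \subset C ->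
    exists p, good c r p a (b :\: a)].

Lemma inv_base : Inv [set set0] (fun _ => 0) (fun _ => 0).
Proof.
split.
- by move=> j.
- move=> g; split.
  + move=> [x [h1 h2]]; rewrite inE; apply/eqP/setP => j; rewrite inE.
    apply/negP => jg; move: (h1 j jg); rewrite /open_ball expr0n /= ltNge.
    by rewrite sqdist_ge0.
  + rewrite inE => /eqP ->; exists 0; split => j; first by rewrite inE.
    move=> _; exact: (@notU R n k (fun _ => 0) (fun _ => 0) j 0 (or_introl erefl)).
- have e0 : forall S, S \subset [set j | (0 : R) < 0] -> S = set0.
    move=> S hS; apply/setP => j; rewrite inE; apply/negP => jS.
    by move: (subsetP hS j jS); rewrite inE ltxx.
  split.
  + by move=> S /e0 ->; rewrite cards0.
  + by move=> S /e0 ->; rewrite cards0.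
- move=> a b ab _ hsub.
  have ha : a \in [set set0 : {set 'I_n}].
    by apply: (subsetP hsub); rewrite inE subxx ab.
  have hb : b \in [set set0 : {set 'I_n}].
    by apply: (subsetP hsub); rewrite inE subxx ab.
  move: ha hb; rewrite !inE => /eqP -> /eqP ->.
  exists 0; split.
  + by rewrite setDv cards0.
  + by move=> j; rewrite setDv inE.
  + exists 1 => // x _; split => j; first by rewrite inE.
    by move=> _ _; left.
  + by move=> beta; exists 0 => j; rewrite setDv inE.
Qed.

Lemma inv_final C c r : code_conventions C -> Inv C c r ->
    [/\ forall i, 0 < r i,
        realizes (UU c r) C,
        well_formed_balls c r
      & forall a b : {set 'I_n}, a \subset b -> (#|b :\: a| <= k)%N ->
          interval_sets a b \subset C ->
          exists p, pierceable_at (UU c r) a b p].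
Proof.
move=> [_ hcov _] [r0 hreal [wf1 wf2] hint].
have rpos : forall i, 0 < r i.
  move=> i; have [g gC ig] := hcov i.
  have [x [hx _]] := (hreal g).2 gC.
  move: (hx i ig); rewrite /open_ball => h.
  rewrite lt_def (r0 i) andbT; apply/eqP => ri; move: h.
  by rewrite ri expr0n /= ltNge sqdist_ge0.
have all : forall S, S \subset [set j | 0 < r j].
  by move=> S; apply/subsetP => j _; rewrite inE rpos.
split => //.
- split.
  + by move=> S hS; apply: wf1 (all S) hS.
  + by move=> S hS; apply: wf2 (all S) hS.
- move=> a b ab hk hsub; have [p hp] := hint a b ab hk hsub.
  by exists p; apply: good_pierce.
Qed.

End Main.


Section Step.
Variables (R : realType) (n k : nat).
Local Notation d := k.+1.
Implicit Types (c : 'I_n -> 'rV[R]_d) (r : 'I_n -> R) (p q x : 'rV[R]_d) (a b g s t A T S : {set 'I_n}).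
Implicit Types (C : {set {set 'I_n}}).
Local Notation good := (@good R n k).
Local Notation UU c r := (fun j => open_ball (c j) (r j)).

Lemma step C i k' : (k' <= k)%N -> is_piercing C i k' ->
  (exists c r, Inv (del_neuron C i) c r) -> exists c r, Inv C c r.
Proof.
move=> kk [s [t [st it hcard hsub hC]]] [c [r [r0 hreal [wf1 wf2] hint]]].
set C0 := del_neuron C i in hsub hC hreal hint.
have F1 : forall g, g \in C0 -> i \notin g.
  by move=> g /imsetP [g' _ ->]; rewrite setD11.
have F3 : forall g, g \in C -> i \notin g -> g \in C0.
  move=> g; rewrite {1}hC inE => /orP [//|]; rewrite inE => /andP [h _] ig.
  by move: (subsetP h i); rewrite setU11 (negbTE ig) => /(_ isT).
have F4 : forall g, g \in C -> i \in g -> g \in interval_sets (i |: s) (i |: t).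
  move=> g; rewrite {1}hC inE => /orP [h|//] ig.
  by move: (F1 g h); rewrite ig.
have F0 : forall g, g \in C0 -> g \in C.
  by move=> g h; rewrite hC inE h.
have F5 : forall x, ~ open_ball (c i) (r i) x.
  move=> x hx.
  pose g := [set j | sqdist x (c j) < r j ^+ 2].
  have : exists x, atom (UU c r) g x.
    by exists x; split => j; rewrite inE // => /negP h /[dup] /h.
  move/(hreal g) => /F1; by rewrite inE hx.
set T := t :\: s.
have hk : (#|t :\: s| <= k)%N by rewrite hcard.
have [p hgp] := hint s t st hk hsub.
have [Tk hT [D D0 hD] hsT] := hgp.
have F6 : forall x g, sqdist x p < D -> atom (UU c r) g x -> g \in interval_sets s t.
  move=> x g hx [h1 h2]; have [hA hO] := hD x hx.
  rewrite inE; apply/andP; split; apply/subsetP => j hj.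
    by apply/negPn/negP => /h2; apply; exact: hA.
  apply/negPn/negP => jt.
  have js : j \notin s by apply/negP => /(subsetP st); rewrite (negbTE jt).
  have jT : j \notin T by rewrite inE (negbTE jt) andbF.
  exact: (@notU R n k c r j x (hO j js jT) (h1 j hj)).
have ppier := good_pierce r0 st hgp.
have [E2 E20 hE2] : exists2 E, 0 < E & forall g, g \in interval_sets s t ->
    exists x, atom (UU c r) g x /\ E <= sqdist x p.
  apply: (@fin_min R _ (fun g E => g \in interval_sets s t ->
    exists x, atom (UU c r) g x /\ E <= sqdist x p)).
  - move=> g; case: (boolP (g \in interval_sets s t)) => hg; last by exists 1.
    have [x [hx xp _]] := (ppier g).2 hg 1 ltr01.
    exists (sqdist x p); first exact: sqdist_gt0.
    by move=> _; exists x.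
  - move=> g E E' _ E'E h /h [x [hx hE]]; exists x; split => //.
    exact: le_trans hE.
have [E3 E30 hE3] : exists2 E, 0 < E & forall S, S \subset T -> (1 <= #|S|)%N ->
    (#|S| < d)%N -> forall e, 0 < e -> e ^+ 2 < E ->
    is_dim_sphere (d - #|S|.+1)
      (fun x => (forall j, j \in S -> bsphere (c j) (r j) x) /\ sqdist x p = e ^+ 2).
  apply: (@fin_min R _ (fun S E => S \subset T -> (1 <= #|S|)%N ->
    (#|S| < d)%N -> forall e, 0 < e -> e ^+ 2 < E ->
    is_dim_sphere (d - #|S|.+1)
      (fun x => (forall j, j \in S -> bsphere (c j) (r j) x) /\ sqdist x p = e ^+ 2))).
  - move=> S.
    case: (boolP [&& S \subset T, (1 <= #|S|)%N & (#|S| < d)%N]); last first.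
      by move=> h; exists 1 => // h1 h2 h3; move: h; rewrite h1 h2 h3.
    case/and3P => h1 h2 h3.
    have Salive : S \subset [set j | 0 < r j].
      by apply/subsetP => j /(subsetP h1) jT; rewrite inE; case: (hT j jT).
    have Sp : forall j, j \in S -> bsphere (c j) (r j) p.
      by move=> j /(subsetP h1) jT; case: (hT j jT).
    have h4 : (1 <= #|S| <= d)%N by rewrite h2 ltnW.
    case: (wf1 S Salive h4) => [/(_ p Sp) []|hsph].
    have edS : (d - #|S| = (d - #|S|.+1).+1)%N by rewrite subnSK.
    rewrite edS in hsph.
    have [E E0 hE] := sphere_cut hsph Sp.
    by exists E => // _ _ _; apply: hE.
  - move=> S E E' _ E'E h h1 h2 h3 e e0 he; apply: h => //.
    exact: lt_le_trans he E'E.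
have [E4 E40 hE4] : exists2 E, 0 < E & forall ab : {set 'I_n} * {set 'I_n},
    ab.1 \subset ab.2 -> (#|ab.2 :\: ab.1| <= k)%N -> interval_sets ab.1 ab.2 \subset C0 ->
    exists q, good c r q ab.1 (ab.2 :\: ab.1) /\ E < sqdist q p.
  apply: (@fin_min R _ (fun (ab : {set 'I_n} * {set 'I_n}) E => ab.1 \subset ab.2 -> (#|ab.2 :\: ab.1| <= k)%N ->
    interval_sets ab.1 ab.2 \subset C0 ->
    exists q, good c r q ab.1 (ab.2 :\: ab.1) /\ E < sqdist q p)).
  - move=> [a b] /=.
    case: (boolP [&& a \subset b, (#|b :\: a| <= k)%N & interval_sets a b \subset C0]);
      last first.
      by move=> h; exists 1 => // h1 h2 h3; move: h; rewrite h1 h2 h3.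
    case/and3P => h1 h2 h3.
    have [q0 hq0] := hint a b h1 h2 h3.
    case: (eqVneq q0 p) => [q0p|qp].
      have dj : [disjoint (b :\: a) & set0] by rewrite -setI_eq0 setI0.
      have [t0 t00 ht] := local_lemma r0 hq0 (subxx _) (sub0set _) dj.
      have t1 : 0 < t0 / 2 by rewrite divr_gt0.
      have t2 : t0 / 2 < t0 by rewrite ltr_pdivrMr //; lra.
      have [q [hqp hq _]] := ht (t0 / 2) t1 t2.
      exists (t0 / 4); first by rewrite divr_gt0.
      move=> _ _ _; exists q; split; first by rewrite setU0 in hq.
      by rewrite -q0p hqp ltr_pM2l //; lra.
    exists (sqdist q0 p / 2); first by rewrite divr_gt0 // sqdist_gt0.
    move=> _ _ _; exists q0; split => //.
    have := sqdist_gt0 qp; lra.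
  - move=> ab E E' _ E'E h h1 h2 h3; have [q [hq hE]] := h h1 h2 h3.
    by exists q; split => //; exact: le_lt_trans hE.
have [E5 E50 hE5] : exists2 E, 0 < E & forall JI : {set 'I_n} * {set 'I_n},
    JI.1 \subset T -> JI.2 \subset T -> [disjoint JI.1 & JI.2] ->
    forall tau, 0 < tau -> tau < E ->
    exists q, [/\ sqdist q p = tau, good c r q (s :|: JI.2) JI.1 &
     forall (beta : 'I_n -> R) (bi : R), exists w,
       (forall j, j \in JI.1 -> dot w (q - c j) = beta j) /\ dot w (q - p) = bi].
  apply: (@fin_min R _ (fun (JI : {set 'I_n} * {set 'I_n}) E => JI.1 \subset T -> JI.2 \subset T -> [disjoint JI.1 & JI.2] ->
    forall tau, 0 < tau -> tau < E ->
    exists q, [/\ sqdist q p = tau, good c r q (s :|: JI.2) JI.1 &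
     forall (beta : 'I_n -> R) (bi : R), exists w,
       (forall j, j \in JI.1 -> dot w (q - c j) = beta j) /\ dot w (q - p) = bi])).
  - move=> [J In] /=.
    case: (boolP [&& J \subset T, In \subset T & [disjoint J & In]]); last first.
      by move=> h; exists 1 => // h1 h2 h3; move: h; rewrite h1 h2 h3.
    case/and3P => h1 h2 h3.
    have [t0 t00 ht] := local_lemma r0 hgp h1 h2 h3.
    by exists t0 => // _ _ _; apply: ht.
  - move=> JI E E' _ E'E h h1 h2 h3 tau t0 tE; apply: h => //.
    exact: lt_le_trans tE E'E.
set Em := Num.min D (Num.min E2 (Num.min E3 (Num.min E4 E5))).
have Em0 : 0 < Em by rewrite /Em !lt_min D0 E20 E30 E40 E50.
set e := Num.sqrt Em / 2.
have e0 : 0 < e by rewrite divr_gt0 // sqrtr_gt0.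
have e2 : e ^+ 2 = Em / 4 by rewrite /e expr_div_n sqr_sqrtr ?ltW //; congr (_ / _); rewrite expr2; lra.
have eEm : e ^+ 2 < Em by rewrite e2 ltr_pdivrMr //; lra.
have eD : e ^+ 2 < D by apply: (lt_le_trans eEm); rewrite /Em ge_min lexx.
have eE2 : e ^+ 2 < E2.
  by apply: (lt_le_trans eEm); rewrite /Em !ge_min lexx !orbT.
have eE3 : e ^+ 2 < E3.
  by apply: (lt_le_trans eEm); rewrite /Em !ge_min lexx !orbT.
have eE4 : e ^+ 2 < E4.
  by apply: (lt_le_trans eEm); rewrite /Em !ge_min lexx !orbT.
have eE5 : e ^+ 2 < E5.
  by apply: (lt_le_trans eEm); rewrite /Em !ge_min lexx !orbT.
have is' : i \notin s by apply/negP => /(subsetP st); rewrite (negbTE it).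
have iT : i \notin T by rewrite inE (negbTE it) andbF.
set c' := updc c i p; set r' := updr r i e.
have cE : forall j, j != i -> c' j = c j by move=> j /negbTE ji; rewrite /c' /updc ji.
have rE : forall j, j != i -> r' j = r j by move=> j /negbTE ji; rewrite /r' /updr ji.
have ci : c' i = p by rewrite /c' /updc eqxx.
have ri : r' i = e by rewrite /r' /updr eqxx.
have UE : forall j x, j != i -> open_ball (c' j) (r' j) x = open_ball (c j) (r j) x.
  by move=> j x ji; rewrite cE // rE.
have Ui : forall x, open_ball (c' i) (r' i) x = (sqdist x p < e ^+ 2).
  by move=> x; rewrite ci ri.
have lift_out : forall g x, i \notin g -> atom (UU c r) g x -> ~ (sqdist x p < e ^+ 2) ->
    atom (UU c' r') g x.
  move=> g x ig [h1 h2] hx; split => j hj.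
    have ji : j != i by apply/negP => /eqP ji; move: ig; rewrite -ji hj.
    by rewrite /= UE //; apply: h1.
  case: (eqVneq j i) => [->|ji]; first by rewrite /= Ui.
  by rewrite /= UE //; apply: h2.
have lift_in : forall g x, i \in g -> atom (UU c r) (g :\ i) x -> sqdist x p < e ^+ 2 ->
    atom (UU c' r') g x.
  move=> g x ig [h1 h2] hx; split => j hj.
    case: (eqVneq j i) => [->|ji]; first by rewrite /= Ui.
    by rewrite /= UE //; apply: h1; rewrite !inE ji hj.
  have ji : j != i by apply/negP => /eqP ji; move: hj; rewrite ji ig.
  by rewrite /= UE //; apply: h2; rewrite !inE ji (negbTE hj).
exists c', r'; split.
- by move=> j; rewrite /r' /updr; case: eqP => _; [exact: ltW | exact: r0].
- move=> g; split.
  + move=> [x [h1 h2]]; case: (boolP (i \in g)) => ig.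
    * have hxp : sqdist x p < e ^+ 2 by move: (h1 i ig); rewrite /= Ui.
      have [hA hO] := hD x (lt_trans hxp eD).
      rewrite hC inE; apply/orP; right; rewrite inE; apply/andP; split; apply/subsetP => j.
        rewrite !inE => /orP [/eqP -> //| js].
        have ji : j != i by apply/negP => /eqP ji; move: is'; rewrite -ji js.
        apply/negPn/negP => /h2; rewrite /= UE //; apply; exact: hA.
      move=> jg; rewrite !inE; case: (eqVneq j i) => [//|ji] /=.
      apply/negPn/negP => jt.
      have js : j \notin s by apply/negP => /(subsetP st); rewrite (negbTE jt).
      have jT : j \notin T by rewrite inE (negbTE jt) andbF.
      by apply: (@notU R n k c r j x (hO j js jT)); move: (h1 j jg); rewrite /= UE.
    * apply: F0; apply/(hreal g); exists x; split => j hj.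
        have ji : j != i by apply/negP => /eqP ji; move: ig; rewrite -ji hj.
        by move: (h1 j hj); rewrite /= UE.
      case: (eqVneq j i) => [->|ji]; first exact: F5.
      by move: (h2 j hj); rewrite /= UE.
  + move=> gC; case: (boolP (i \in g)) => ig.
    * have := F4 g gC ig; rewrite inE => /andP [sg gt].
      have g0 : g :\ i \in interval_sets s t.
        rewrite inE; apply/andP; split; apply/subsetP => j.
          move=> js; have ji : j != i by apply/negP => /eqP ji; move: is'; rewrite -ji js.
          by rewrite !inE ji /=; apply: (subsetP sg); rewrite !inE js orbT.
        rewrite !inE => /andP [ji jg]; move: (subsetP gt j jg).
        by rewrite !inE (negbTE ji).
      have [x [hx _ hxp]] := (ppier (g :\ i)).2 g0 e e0.
      by exists x; apply: lift_in.
    * have gC0 := F3 g gC ig.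
      case: (boolP (g \in interval_sets s t)) => hg.
        have [x [hx hxp]] := hE2 g hg.
        exists x; apply: lift_out => // h; move: (lt_le_trans h (le_trans (ltW eE2) hxp)).
        by rewrite ltxx.
      have [x hx] := (hreal g).2 gC0.
      exists x; apply: lift_out => // h.
      by move: (F6 x g (lt_trans h eD) hx); rewrite (negbTE hg).
- have far : forall S x, i \in S -> S \subset [set j | 0 < r' j] -> ~~ (S :\ i \subset T) ->
      ~ (forall j, j \in S -> bsphere (c' j) (r' j) x).
    move=> S x iS Sal /subsetPn [j jS' jT] hx.
    move: jS'; rewrite !inE => /andP [ji jS].
    have hxp : sqdist x p < D by move: (hx i iS); rewrite /bsphere ci ri => ->.
    have [hA hO] := hD x hxp.
    have rj : 0 < r j by move: (subsetP Sal j jS); rewrite inE rE.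
    have hj : sqdist x (c j) = r j ^+ 2 by move: (hx j jS); rewrite /bsphere cE // rE.
    case: (boolP (j \in s)) => js.
      by move: (hA j js); rewrite hj ltxx.
    case: (hO j js jT) => [rj0|]; first by move: rj; rewrite rj0 ltxx.
    by rewrite hj ltxx.
  have old : forall S, i \notin S -> S \subset [set j | 0 < r' j] ->
      S \subset [set j | 0 < r j] /\ forall x,
      (forall j, j \in S -> bsphere (c' j) (r' j) x) <-> (forall j, j \in S -> bsphere (c j) (r j) x).
    move=> S iS Sal; split.
      apply/subsetP => j jS; have ji : j != i by apply/negP => /eqP ji; move: iS; rewrite -ji jS.
      by move: (subsetP Sal j jS); rewrite !inE rE.
    move=> x; split => h j jS; have ji : j != i by apply/negP => /eqP ji; move: iS; rewrite -ji jS.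
      by move: (h j jS); rewrite /bsphere cE // rE.
    by rewrite /bsphere cE // rE //; apply: h.
  split.
  + move=> S Sal hS /=.
    case: (boolP (i \in S)) => iS; last first.
      have [Sal' hiff] := old S iS Sal.
      case: (wf1 S Sal' hS) => [h|h].
        by left => x /hiff; apply: h.
      by right; apply: is_dim_sphere_ext h => x; rewrite hiff.
    case: (boolP (S :\ i \subset T)) => S'T; last by left => x; apply: far.
    have cS : #|S| = #|S :\ i|.+1 by rewrite (cardsD1 i S) iS.
    case: (eqVneq (S :\ i) set0) => [S0|S0].
      right; exists p, e, fullv; split => //.
        by rewrite dimvf /dim /= mul1n cS S0 cards0 subn1.
      move=> x; rewrite memvf; split.
        by move=> h; split => //; move: (h i iS); rewrite /bsphere ci ri.
      move=> [_ h] j jS; case: (eqVneq j i) => [->|ji]; first by rewrite /bsphere ci ri.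
      by move: S0 => /setP/(_ j); rewrite !inE ji jS.
    right.
    have h1 : (1 <= #|S :\ i|)%N by rewrite lt0n cards_eq0.
    have h2 : (#|S :\ i| < d)%N by move: hS; rewrite cS => /andP [_ ->].
    have := hE3 (S :\ i) S'T h1 h2 e e0 eE3; rewrite -cS.
    apply: is_dim_sphere_ext => x; split.
      move=> [h hx] j jS; case: (eqVneq j i) => [->|ji]; first by rewrite /bsphere ci ri.
      by rewrite /bsphere cE // rE //; apply: h; rewrite !inE ji.
    move=> h; split; last by move: (h i iS); rewrite /bsphere ci ri.
    move=> j; rewrite !inE => /andP [ji jS]; move: (h j jS).
    by rewrite /bsphere cE // rE.
  + move=> S Sal hS x.
    case: (boolP (i \in S)) => iS; last first.
      have [Sal' hiff] := old S iS Sal.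
      by move=> /hiff; apply: wf2 Sal' hS x.
    apply: far => //; apply/negP => /subset_leq_card.
    have cS : #|S| = #|S :\ i|.+1 by rewrite (cardsD1 i S) iS.
    move: hS; rewrite cS => -[->] h.
    by move: (leq_trans h Tk); rewrite ltnn.
- move=> a b ab hkk hsubI.
  have bC : b \in C by apply: (subsetP hsubI); rewrite inE ab subxx.
  have aC : a \in C by apply: (subsetP hsubI); rewrite inE ab subxx.
  case: (boolP (i \in b)) => ib; last first.
    have hsub0 : interval_sets a b \subset C0.
      apply/subsetP => g hg; apply: F3; first exact: (subsetP hsubI).
      move: hg; rewrite inE => /andP [_ gb]; apply/negP => /(subsetP gb).
      by rewrite (negbTE ib).
    have [q [hq hqp]] := hE4 (a, b) ab hkk hsub0.
    exists q; apply: good_out => //.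
    + by apply/negP => /(subsetP ab); rewrite (negbTE ib).
    + by rewrite inE (negbTE ib) andbF.
    + exact: lt_trans eE4 hqp.
  have := F4 b bC ib; rewrite inE => /andP [sb bt].
  case: (boolP (i \in a)) => ia.
  + have := F4 a aC ia; rewrite inE => /andP [sa _].
    have sa' : s \subset a.
      by apply/subsetP => j js; apply: (subsetP sa); rewrite !inE js orbT.
    set J := b :\: a; set In := (a :\ i) :\: s.
    have JT : J \subset T.
      apply/subsetP => j; rewrite !inE => /andP [ja jb].
      have ji : j != i by apply/negP => /eqP ji; move: ja; rewrite ji ia.
      move: (subsetP bt j jb); rewrite !inE (negbTE ji) /= => ->.
      by rewrite andbT; apply/negP => /(subsetP sa'); rewrite (negbTE ja).
    have InT : In \subset T.
      apply/subsetP => j; rewrite !inE => /andP [js /andP [ji ja]].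
      move: (subsetP bt j (subsetP ab j ja)); rewrite !inE (negbTE ji) /= => ->.
      by rewrite js.
    have dj : [disjoint J & In].
      rewrite -setI_eq0; apply/eqP/setP => j; rewrite !inE.
      by case: (j \in a); rewrite ?andbF.
    have t1 : 0 < e ^+ 2 / 2 by rewrite divr_gt0 // exprn_gt0.
    have t2 : e ^+ 2 / 2 < E5.
      apply: le_lt_trans eE5; rewrite ler_pdivrMr //.
      have : 0 <= e ^+ 2 by rewrite sqr_ge0.
      lra.
    have [q [hqp hq _]] := hE5 (J, In) JT InT dj _ t1 t2.
    exists q.
    have -> : a = i |: (s :|: In).
      apply/setP => j; rewrite !inE; case: (eqVneq j i) => [->|ji] //=.
      case: (boolP (j \in s)) => js /=; first by rewrite (subsetP sa' j js).
      by [].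
    apply: good_in => //.
    + by rewrite !inE (negbTE is') eqxx.
    + by rewrite !inE ia.
    + rewrite hqp ltr_pdivrMr //.
      have : 0 < e ^+ 2 by rewrite exprn_gt0.
      lra.
  + have iaC : i |: a \in C.
      apply: (subsetP hsubI); rewrite inE subsetUr /=.
      by apply/subsetP => j; rewrite !inE => /orP [/eqP -> //| /(subsetP ab)].
    have := F4 _ iaC (setU11 i a); rewrite inE => /andP [sa _].
    have sa' : s \subset a.
      apply/subsetP => j js; have := subsetP sa j; rewrite !inE js orbT => /(_ isT).
      case/orP => // /eqP ji; move: is'; rewrite -ji js.
      by [].
    set J := (b :\: a) :\ i; set In := a :\: s.
    have JT : J \subset T.
      apply/subsetP => j; rewrite !inE => /andP [ji /andP [ja jb]].
      move: (subsetP bt j jb); rewrite !inE (negbTE ji) /= => ->.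
      by rewrite andbT; apply/negP => /(subsetP sa'); rewrite (negbTE ja).
    have InT : In \subset T.
      apply/subsetP => j; rewrite !inE => /andP [js ja].
      have ji : j != i by apply/negP => /eqP ji; move: ia; rewrite -ji ja.
      move: (subsetP bt j (subsetP ab j ja)); rewrite !inE (negbTE ji) /= => ->.
      by rewrite js.
    have dj : [disjoint J & In].
      rewrite -setI_eq0; apply/eqP/setP => j; rewrite !inE.
      by case: (j \in a); rewrite ?andbF.
    have [q [hqp hq hext]] := hE5 (J, In) JT InT dj _ (exprn_gt0 2 e0) eE5.
    rewrite /= setUDK // in hq.
    have iJ : i \notin J by rewrite !inE eqxx.
    have cJ : #|b :\: a| = #|J|.+1.
      by rewrite (cardsD1 i (b :\: a)) !inE ia ib.
    exists q.
    have -> : b :\: a = i |: J by rewrite setD1K // !inE ia ib.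
    apply: good_on => //.
    + by rewrite -cJ.
Qed.
End Step.

Lemma inv_exists (R : realType) (n k : nat) (C : {set {set 'I_n}}) :
  k_ind_pierced k C -> exists (c : 'I_n -> 'rV[R]_k.+1) (r : 'I_n -> R), Inv C c r.
Proof.
elim=> [|C' i k' kk hp _ IH].
  by exists (fun _ => 0), (fun _ => 0); apply: inv_base.
exact: step kk hp IH.
Qed.

Theorem lemma3p4 (R : realType) (n k : nat) (C : {set {set 'I_n}}) :
  code_conventions C -> k_ind_pierced k C ->
  exists (c : 'I_n -> 'rV[R]_k.+1) (r : 'I_n -> R),
    [/\ forall i, 0 < r i,
        realizes (fun i => open_ball (c i) (r i)) C,
        well_formed_balls c r
      & forall a b : {set 'I_n}, a \subset b -> (#|b :\: a| <= k)%N ->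
          interval_sets a b \subset C ->
          exists p, pierceable_at (fun i => open_ball (c i) (r i)) a b p].
Proof.
move=> hcc hk; have [c [r hinv]] := @inv_exists R n k C hk.
by exists c, r; apply: inv_final.
Qed.
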